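(* Let $G=(V,E)$ be a finite simple graph of order $n$. For each feasible solution $(x,z)$ of the Fort Number Model $\mathrm{FN}(G)$ there is a collection $\mathcal{F}$ of pairwise disjoint forts of $G$ with $|\mathcal{F}|=\sum_{i=1}^n z_i$.
   Context: $N(u)$ denotes the neighborhood of $u$. A fort of $G$ is a non-empty set $F\subseteq V$ such that no vertex $u\in V\setminus F$ has exactly one neighbor in $F$. The Fort Number Model $\mathrm{FN}(G)$ has binary variables $x_{iv}$ ($i\in\{1,\dots,n\}$, $v\in V$) and $z_i$ ($i\in\{1,\dots,n\}$), with constraints: $z_i-\sum_{u\in V}x_{iu}\leq0$ for all $i$; $x_{iu}-x_{iv}+\sum_{w\in N(u)\setminus\{v\}}x_{iw}\geq0$ for all $i$, all $v\in V$ and all $u\in N(v)$; $\sum_{i=1}^n x_{iu}\leq1$ for all $u\in V$. Its objective is to maximize $\sum_{i=1}^n z_i$. A feasible solution is one satisfying all constraints. *)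

(* Defs.v *)
From mathcomp Require Import all_boot all_order.
Set Implicit Arguments. Unset Strict Implicit. Unset Printing Implicit Defensive.

Definition simple_graph (T : finType) (e : rel T) : Prop :=
  symmetric e /\ irreflexive e.

Definition nbhd (T : finType) (e : rel T) (u : T) : {set T} := [set w | e u w].

Definition is_fort (T : finType) (e : rel T) (F : {set T}) : Prop :=
  F != set0 /\ forall u, u \notin F -> #|nbhd e u :&: F| != 1.

(* Feasibility for FN(G) with n = #|T|; binary variables encoded as booleans
   (coerced to 0/1 naturals). The linear constraints are rearranged so that
   all terms are nonnegative (equivalent over the integers). *)
Definition FN_feasible (T : finType) (e : rel T)
    (x : 'I_#|T| -> T -> bool) (z : 'I_#|T| -> bool) : Prop :=
  (forall i, (z i : nat) <= \sum_(u : T) (x i u : nat)) /\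
  (forall i v u, e v u ->
      (x i v : nat) <= (x i u : nat) + \sum_(w in nbhd e u :\ v) (x i w : nat)) /\
  (forall u, \sum_(i < #|T|) (x i u : nat) <= 1).

(* Main.v *)
Require Import Defs.
From mathcomp Require Import all_boot all_order.

Theorem theorem7p1 (T : finType) (e : rel T) (He : simple_graph e)
    (x : 'I_#|T| -> T -> bool) (z : 'I_#|T| -> bool) :
  FN_feasible e x z ->
  exists FF : {set {set T}},
    (forall F, F \in FF -> is_fort e F) /\
    (forall F1 F2, F1 \in FF -> F2 \in FF -> F1 != F2 -> [disjoint F1 & F2]) /\
    #|FF| = \sum_(i < #|T|) (z i : nat).
Proof.
case: He => esym _.
case=> [Hz [Hc Hd]].
pose Fi i := [set u | x i u].
have nonempty : forall i, z i -> Fi i != set0.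
  move=> i zi; apply/set0Pn.
  have := Hz i; rewrite zi => /=.
  case: (pickP (fun u => x i u)) => [u xu|none] H.
    by exists u; rewrite inE.
  suff: \sum_(u : T) (x i u : nat) = 0 by move=> E; rewrite E in H.
  by apply: big1 => u _; rewrite none.
have disj : forall i j, i != j -> [disjoint Fi i & Fi j].
  move=> i j ij; apply/pred0P => u /=; rewrite !inE.
  apply/negP => /andP [xi xj].
  have := Hd u.
  rewrite (bigD1 i) //= (bigD1 j) /=; last by rewrite eq_sym ij.
  by rewrite xi xj addnA.
exists [set Fi i | i in [pred i | z i]]; split; [|split].
- move=> F /imsetP [i /= zi ->]; split; first exact: nonempty.
  move=> u; rewrite inE => xu; apply/negP => /cards1P [v Hv].
  have vin : v \in nbhd e u :&: Fi i by rewrite Hv set11.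
  move: vin; rewrite !inE => /andP [euv xv].
  have := Hc i v u; rewrite esym euv => /(_ isT).
  rewrite xv (negbTE xu) add0n big1 //.
  move=> w; rewrite !inE => /andP [wv ew].
  apply/eqP; rewrite eqb0; apply/negP => xw.
  have : w \in nbhd e u :&: Fi i by rewrite !inE ew xw.
  by rewrite Hv inE (negbTE wv).
- move=> F1 F2 /imsetP [i _ ->] /imsetP [j _ ->] Hne.
  apply: disj; apply: contraNneq Hne => ->; by [].
- rewrite card_in_imset.
    rewrite -sum1_card big_mkcond /=.
    by apply: eq_bigr => i _; rewrite inE; case: (z i).
  move=> i j zi zj E; apply/eqP; apply/negPn/negP => ij.
  have := disj i j ij; rewrite E.
  case/set0Pn: (nonempty j zj) => u uj.
  by move/pred0P/(_ u) => /=; rewrite uj.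
Qed.
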